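(* For any $(u,z,\mathcal R,\dot{\mathcal R})$ (with $u\in L^2(B_1)$ radial and $z,\mathcal R,\dot{\mathcal R}\in\mathbb R$) satisfying the linearized constant-mass condition $\int_{B_1}u\,dx=-\frac{4\pi}3z-4\pi\frac{\rho_*}{R_*}\mathcal R$, the linearized total energy \[ \mathcal E^L_{\rm total}=-4\pi\sigma\mathcal R^2-4\pi R_gT_\infty R_*^2\mathcal Rz-\frac{2\pi R_gT_\infty R_*^3}{3\rho_*}z^2+\frac{c_v\gamma T_\infty R_*^3}{2\rho_*}\int_{B_1}u^2dx+2\pi\rho_lR_*^3\dot{\mathcal R}^2 \] satisfies \[ \mathcal E^L_{\rm total}\ge2\pi(4\sigma+3p_{\infty,*}R_* )\mathcal R^2+\frac{c_vT_\infty R_*^3}{2\rho_*}\int_{B_1}u^2dx+2\pi\rho_lR_*^3\dot{\mathcal R}^2. \]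
   Context: Parameters: $\gamma>1$, $c_v>0$, $R_g>0$ with $\gamma c_v=c_v+R_g$; $T_\infty>0$, $p_{\infty,*}>0$, $\sigma>0$, $\rho_l>0$; $\rho_*,R_*>0$ satisfy $R_gT_\infty\rho_*=p_{\infty,*}+2\sigma/R_*$. $B_1$ is the unit ball of $\mathbb R^3$. *)

(* Defs.v *)
From HB Require Import structures.
From mathcomp Require Import all_boot all_order all_algebra.
From mathcomp Require Import all_classical all_reals all_analysis.

Import Order.TTheory GRing.Theory Num.Theory.
Local Open Scope classical_set_scope.
Local Open Scope ring_scope.

Definition R3 (R : realType) := ((R * R) * R)%type.

Definition leb3 (R : realType) :=
  ((@lebesgue_measure R \x @lebesgue_measure R) \x @lebesgue_measure R)%E.

Definition sqnorm3 {R : realType} (x : R3 R) : R :=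
  x.1.1 ^+ 2 + x.1.2 ^+ 2 + x.2 ^+ 2.

Definition B1 (R : realType) : set (R3 R) := [set x | sqnorm3 x < 1].

Definition radial {R : realType} (u : R3 R -> R) : Prop :=
  forall x y : R3 R, sqnorm3 x = sqnorm3 y -> u x = u y.

Definition L2_B1 {R : realType} (u : R3 R -> R) : Prop :=
  measurable_fun (B1 R) u /\
  (leb3 R).-integrable (B1 R) (fun x => ((u x) ^+ 2)%:E).

(* Main.v *)
Require Import Defs.
From HB Require Import structures.
From mathcomp Require Import all_boot all_order all_algebra.
From mathcomp Require Import all_classical all_reals all_analysis.
From mathcomp Require Import measurable_realfun ring lra.
Import Order.TTheory GRing.Theory Num.Theory numFieldNormedType.Exports.
Local Open Scope classical_set_scope.
Local Open Scope ring_scope.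

Section S.
Variable R : realType.
Notation mu := (@lebesgue_measure R).

Lemma int_cos2 (a : R) :
  (\int[mu]_(t in `[(- (pi / 2))%R, (pi / 2)%R]%classic) ((2 * a * cos t ^+ 2)%R)%:E)%E = ((pi * a)%R)%:E.
Proof.
pose H : R -> R := a \*: (id + sin * cos).
have dH : forall t : R, is_derive t (1:R) H (2 * a * cos t ^+ 2).
  move=> t; apply: is_derive_eq.
  rewrite -[LHS]/(a * (1 + (sin t * - sin t + cos t * cos t))).
  transitivity (a * (1 - sin t ^+ 2 + cos t ^+ 2)); first by ring.
  by rewrite sin2cos2; ring.
have cH : forall x : R, {for x, continuous H}.
  by move=> x; apply/differentiable_continuous; rewrite -derivable1_diffP.
have pi0 : (0 : R) < pi := pi_gt0 R.
rewrite (@continuous_FTC2 _ _ H); first last.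
- by move=> x _; rewrite derive1E derive_val.
- split.
  + by move=> x _.
  + exact/cvg_at_right_filter/cH.
  + exact/cvg_at_left_filter/cH.
- apply: derivable_within_continuous => x _.
  have -> : (fun t => 2 * a * cos t ^+ 2) = (2 * a) \*: (@cos R ^+ 2).
    by apply/funext.
  exact: ex_derive.
- lra.
rewrite -EFinB; congr EFin.
rewrite -[H (pi / 2)]/(a * (pi / 2 + sin (pi / 2) * cos (pi / 2))) -[H (- (pi / 2))]/(a * (- (pi / 2) + sin (- (pi / 2)) * cos (- (pi / 2)))).
rewrite sinN cosN sin_pihalf cos_pihalf; lra.
Qed.

Lemma slice (a : R) (a0 : 0 < a) :
  (\int[mu]_(y in `[(- Num.sqrt a)%R, (Num.sqrt a)%R]%classic) ((2 * Num.sqrt (a - y ^+ 2))%R)%:E)%E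
  = ((pi * a)%R)%:E.
Proof.
set r := Num.sqrt a.
have r0 : 0 < r by rewrite sqrtr_gt0.
have rr : r ^+ 2 = a by rewrite sqr_sqrtr // ltW.
pose F : R -> R := r \*: (@sin R).
pose G : R -> R := fun y => 2 * Num.sqrt (a - y ^+ 2).
have dF : forall t : R, is_derive t (1:R) F (r * cos t).
  by move=> t; apply: is_derive_eq.
have F'E : derive1 F = r \*: (@cos R).
  by apply/funext => t; rewrite derive1E derive_val.
have cF' : forall x : R, {for x, continuous (derive1 F)}.
  move=> x; rewrite F'E.
  by apply/differentiable_continuous; rewrite -derivable1_diffP.
have cF : forall x : R, {for x, continuous F}.
  by move=> x; apply/differentiable_continuous; rewrite -derivable1_diffP.
have Fl : F (- (pi / 2)) = - r.
  by rewrite -[LHS]/(r * sin (- (pi / 2))) sinN sin_pihalf mulrN1.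
have Fr : F (pi / 2) = r.
  by rewrite -[LHS]/(r * sin (pi / 2)) sin_pihalf mulr1.
have pi0 : (0 : R) < pi := pi_gt0 R.
have cP : forall y : R, {for y, continuous (cst a - id * id : R -> R)}.
  by move=> y; apply/differentiable_continuous; rewrite -derivable1_diffP.
have cG : continuous G.
  move=> y; have -> : G = (cst 2) \* (Num.sqrt \o (cst a - id * id)).
    by apply/funext.
  apply: continuousM; first exact: cst_continuous.
  apply: continuous_comp; [exact: cP | exact: sqrt_continuous].
rewrite -Fl -Fr.
rewrite (@integration_by_substitution_increasing _ F G); first last.
- exact: continuous_subspaceT.
- split.
  + by move=> x _.
  + exact/cvg_at_right_filter/cF.
  + exact/cvg_at_left_filter/cF.
- by apply/cvg_ex; eexists; exact/cvg_at_left_filter/cF'.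
- by apply/cvg_ex; eexists; exact/cvg_at_right_filter/cF'.
- by move=> x _; exact: cF'.
- move=> x y xI yI xy.
  rewrite -[F x]/(r * sin x) -[F y]/(r * sin y) ltr_pM2l //.
  by rewrite ltr_sin.
- lra.
rewrite -(int_cos2 a); apply: eq_integral => x xI.
rewrite F'E; congr EFin.
rewrite -[LHS]/(2 * Num.sqrt (a - (r * sin x) ^+ 2) * (r * cos x)).
have cx : 0 <= cos x.
  apply: cos_ge0_pihalf; move: xI; rewrite inE /= in_itv /=.
  by [].
have -> : a - (r * sin x) ^+ 2 = (r * cos x) ^+ 2.
  by rewrite !exprMn rr sin2cos2; ring.
rewrite sqrtr_sqr ger0_norm; last by rewrite mulr_ge0 // ltW.
by rewrite -rr; ring.
Qed.

Lemma line (a : R) :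
  (\int[mu]_y ((2 * Num.sqrt (a - y ^+ 2))%R)%:E)%E = ((pi * Num.max a 0)%R)%:E.
Proof.
have [a0|a0] := lerP a 0.
  rewrite mulr0; apply: integral0_eq => y _ /=.
  by rewrite ler0_sqrtr ?mulr0 // lerBlDr; apply: (le_trans a0); rewrite addr_ge0 ?sqr_ge0.
rewrite -(@slice a a0 : _ = ((pi * a)%R)%:E) [RHS]integral_mkcond; apply: eq_integral => y _.
rewrite patchE; case: ifPn => //.
rewrite notin_setE /= in_itv /= => /negP; rewrite -ler_norml -ltNge => hy.
have ha : a < y ^+ 2.
  rewrite -(sqr_sqrtr (ltW a0)) -(real_normK (num_real y)).
  by rewrite ltr_pXn2r // nnegrE sqrtr_ge0.
by rewrite ler0_sqrtr ?mulr0 // subr_le0 ltW.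
Qed.

Lemma outer :
  (\int[mu]_x ((pi * Num.max (1 - x ^+ 2) 0)%R)%:E)%E = ((4 * pi / 3)%R)%:E.
Proof.
have pi0 : (0 : R) < pi := pi_gt0 R.
transitivity (\int[mu]_(x in `[(-1)%R, 1%R]%classic) ((pi * (1 - x ^+ 2))%R)%:E)%E.
  rewrite [RHS]integral_mkcond; apply: eq_integral => x _.
  rewrite patchE; case: ifPn.
    rewrite inE /= in_itv /= -ler_norml => hx.
    rewrite max_l // subr_ge0 -(real_normK (num_real x)).
    by rewrite expr_le1.
  rewrite notin_setE /= in_itv /= => /negP; rewrite -ler_norml -ltNge => hx.
  rewrite max_r ?mulr0 // subr_le0 -(real_normK (num_real x)).
  by rewrite ltW // expr_gt1.
pose K : R -> R := pi \*: (id - 3^-1 \*: (id * id * id)).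
have dK : forall t : R, is_derive t (1:R) K (pi * (1 - t ^+ 2)).
  move=> t; apply: is_derive_eq.
  rewrite -[LHS]/(pi * (1 - 3^-1 * ((t * t) * 1 + t * (t * 1 + t * 1)))).
  rewrite -[t ^+ 2]/(t * t).
  by field.
have cK : forall x : R, {for x, continuous K}.
  by move=> x; apply/differentiable_continuous; rewrite -derivable1_diffP.
rewrite (@continuous_FTC2 _ _ K); first last.
- by move=> x _; rewrite derive1E derive_val.
- split.
  + by move=> x _.
  + exact/cvg_at_right_filter/cK.
  + exact/cvg_at_left_filter/cK.
- apply: derivable_within_continuous => x _.
  have dd : derivable (pi \*: (cst 1 - id * id) : R -> R) x 1 by exact: ex_derive.
  exact: dd.
- lra.
rewrite -EFinB; congr EFin.
rewrite -[K 1]/(pi * (1 - 3^-1 * (1 * 1 * 1))) -[K (-1)]/(pi * (-1 - 3^-1 * ((-1) * (-1) * (-1)))).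
by field.
Qed.

Lemma sq_lt_sqrt (a w : R) : (w ^+ 2 < a) = (`|w| < Num.sqrt a).
Proof.
have [a0|a0] := lerP a 0.
  rewrite ler0_sqrtr // normr_lt0; apply/negbTE; rewrite -leNgt.
  exact: le_trans a0 (sqr_ge0 w).
rewrite -(real_normK (num_real w)) -{1}(sqr_sqrtr (ltW a0)).
by rewrite ltr_pXn2r // nnegrE sqrtr_ge0.
Qed.

Lemma xsecB1 (p : R * R) :
  xsection (B1 R) p =
  `](- Num.sqrt (1 - p.1 ^+ 2 - p.2 ^+ 2)), (Num.sqrt (1 - p.1 ^+ 2 - p.2 ^+ 2))[%classic.
Proof.
apply/seteqP; split => w /=; rewrite /xsection /B1 /sqnorm3 /= in_itv /= ?inE /=;
  rewrite -ltr_norml -sq_lt_sqrt; lra.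
Qed.

Lemma vol_B1 : leb3 R (B1 R) = ((4 * pi / 3)%R)%:E.
Proof.
have -> : leb3 R (B1 R) = (\int[(mu \x mu)%E]_p (mu (xsection (B1 R) p)))%E by [].
transitivity (\int[(mu \x mu)%E]_p ((2 * Num.sqrt (1 - p.1 ^+ 2 - p.2 ^+ 2))%R)%:E)%E.
  apply: eq_integral => p _ /=; rewrite xsecB1 lebesgue_measure_itv /=.
  rewrite lte_fin; case: ifPn => h.
    by rewrite -EFinD opprK -mulr2n mulr_natl.
  have : Num.sqrt (1 - p.1 ^+ 2 - p.2 ^+ 2) <= 0.
    by rewrite leNgt; apply: contra h => hh; apply: (@lt_trans _ _ 0); rewrite ?oppr_lt0.
  move=> h2; have -> : Num.sqrt (1 - p.1 ^+ 2 - p.2 ^+ 2) = 0.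
    by apply/eqP; rewrite eq_le h2 sqrtr_ge0.
  by rewrite mulr0.
rewrite fubini_tonelli1; last 2 first.
- apply/measurable_EFinP; apply: measurable_funM => //.
  apply: measurableT_comp; first exact: continuous_measurable_fun (@sqrt_continuous R).
  apply: measurable_funB; first apply: measurable_funB => //.
  + exact: measurable_funX.
  + exact: measurable_funX.
- by move=> p /=; rewrite lee_fin mulr_ge0 ?sqrtr_ge0.
rewrite -outer; apply: eq_integral => x _.
by rewrite /fubini_F -line; apply: eq_integral => y _ /=.
Qed.

End S.

Definition LT3 (R : realType) := ((measurableTypeR R * measurableTypeR R) * measurableTypeR R)%type.

Lemma measurable_sqnorm3 (R : realType) : measurable_fun setT (@sqnorm3 R).
Proof.
rewrite /sqnorm3.
apply: measurable_funD; first apply: measurable_funD.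
- by apply: measurable_funX; apply: measurableT_comp => //; apply: measurableT_comp.
- by apply: measurable_funX; apply: measurableT_comp => //; apply: measurableT_comp.
- by apply: measurable_funX; exact: measurable_snd.
Qed.

Lemma measurable_B1 (R : realType) : measurable (B1 R).
Proof.
have := @measurable_sqnorm3 R measurableT _ (measurable_itv `]-oo, 1[).
rewrite setTI; congr measurable; apply/seteqP; split => x /=; rewrite /B1 /=;
  by rewrite in_itv /=.
Qed.



Lemma alg2 (R : realType) (gamma c_v R_g T_inf p_inf sigma rho_l rho_s R_s pi z Rc Rdot I M: R)
  (Hpi : 0 < pi) (Hcv : 0 < c_v)
  (Hrhos : 0 < rho_s) (HRs : 0 < R_s)
  (hp : p_inf = R_g * T_inf * rho_s - 2 * sigma / R_s)
  (hg : gamma = (c_v + R_g) / c_v)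
  (HM : M = - (4 * pi / 3) * z - 4 * pi * (rho_s / R_s) * Rc) :
  (- 4 * pi * sigma * Rc ^+ 2
           - 4 * pi * R_g * T_inf * R_s ^+ 2 * Rc * z
           - (2 * pi * R_g * T_inf * R_s ^+ 3) / (3 * rho_s) * z ^+ 2
           + (c_v * gamma * T_inf * R_s ^+ 3) / (2 * rho_s) * I
           + 2 * pi * rho_l * R_s ^+ 3 * Rdot ^+ 2) -
  (2 * pi * (4 * sigma + 3 * p_inf * R_s) * Rc ^+ 2
    + (c_v * T_inf * R_s ^+ 3) / (2 * rho_s) * I
    + 2 * pi * rho_l * R_s ^+ 3 * Rdot ^+ 2) =
  R_g * T_inf * R_s ^+ 3 / (2 * rho_s) * (I - 3 * M ^+ 2 / (4 * pi)).
Proof.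
rewrite hp hg HM; field.
by rewrite !gt_eqF.
Qed.

Lemma CS_B1 (R : realType) (u : R3 R -> R) (HuL2 : L2_B1 u) :
  3 * (Rintegral (leb3 R) (B1 R) u) ^+ 2 / (4 * pi)
  <= Rintegral (leb3 R) (B1 R) (fun x => u x ^+ 2).
Proof.
have mB : measurable (B1 R : set (LT3 R)) := measurable_B1 R.
case: HuL2 => mu iu2.
have pi0 : (0 : R) < pi := pi_gt0 R.
have i1 : forall k : R, (leb3 R).-integrable (B1 R : set (LT3 R)) (EFin \o cst k).
  move=> k; apply/integrableP; split; first exact/measurable_EFinP.
  rewrite (eq_integral (cst `|k|%:E)); last by move=> x _.
  rewrite integral_cst // [X in (_ * X < _)%E](_ : _ = (4*pi/3)%:E); last exact: vol_B1.
  by rewrite -EFinM ltry.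
have iu : (leb3 R).-integrable (B1 R : set (LT3 R)) (EFin \o u).
  apply: (@le_integrable _ _ _ (leb3 R) (B1 R) mB _ (fun x => (1 + u x ^+ 2)%:E)) => //.
  - by apply/measurable_EFinP; exact: mu.
  - move=> x _ /=; rewrite lee_fin [`|1 + _|]ger0_norm ?addr_ge0 ?sqr_ge0 //.
    rewrite -(real_normK (num_real (u x))); have := normr_ge0 (u x).
    move: `|u x| => t t0; rewrite -subr_ge0.
    have -> : 1 + t ^+ 2 - t = (t - 1/2) ^+ 2 + 3/4 by field.
    by rewrite addr_ge0 ?sqr_ge0.
  - rewrite (_ : (fun x => _) = (EFin \o cst 1) \+ (fun x => (u x ^+ 2)%:E)) //.
    exact: integrableD.
set M := (X in 3 * X ^+ 2 / _ <= _).
set c := 3 * M / (4 * pi).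
have iZ : (leb3 R).-integrable (B1 R : set (LT3 R)) (EFin \o (fun x => 2 * c * u x)).
  rewrite (_ : _ \o _ = (fun x => ((2 * c)%:E * (u x)%:E)%E)); last first.
    by apply/funext => x /=; rewrite EFinM.
  exact: integrableZl.
have key : Rintegral (leb3 R) (B1 R) (fun x => 2 * c * u x - c ^+ 2)
   <= Rintegral (leb3 R) (B1 R) (fun x => u x ^+ 2).
  apply: le_Rintegral => //.
  - rewrite (_ : _ \o _ = (fun x => ((2*c)%R%:E * (u x)%:E - (cst (c^+2)%R x)%:E)%E)); last first.
      by apply/funext => x /=; rewrite EFinB EFinM.
    exact: (integrableB mB (integrableZl mB (2*c) iu) (i1 (c^+2))).
  - move=> x _; rewrite -subr_ge0.
    have -> : u x ^+ 2 - (2 * c * u x - c ^+ 2) = (u x - c) ^+ 2 by ring.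
    exact: sqr_ge0.
have e1 : Rintegral (leb3 R) (B1 R) (fun x => 2 * c * u x - c ^+ 2)
   = 2 * c * M - c ^+ 2 * (4 * pi / 3).
  rewrite (RintegralB mB iZ (i1 _)) (RintegralZl _ mB iu) (Rintegral_cst _ mB).
  rewrite [X in fine X](_ : _ = (4*pi/3)%:E) //; exact: vol_B1.
rewrite e1 in key.
apply: le_trans key; rewrite le_eqVlt; apply/orP; left; apply/eqP.
  rewrite /c; move: pi0; move: (pi : R) => p p0; field; exact: lt0r_neq0.
Qed.

Theorem proposition3p5 (R : realType)
  (gamma c_v R_g T_inf p_inf sigma rho_l rho_s R_s : R)
  (Hgamma : 1 < gamma) (Hcv : 0 < c_v) (HRg : 0 < R_g)
  (Hgas : gamma * c_v = c_v + R_g)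
  (HT : 0 < T_inf) (Hp : 0 < p_inf) (Hsigma : 0 < sigma) (Hrhol : 0 < rho_l)
  (Hrhos : 0 < rho_s) (HRs : 0 < R_s)
  (Heq : R_g * T_inf * rho_s = p_inf + 2 * sigma / R_s)
  (u : R3 R -> R) (z Rc Rdot : R)
  (HuL2 : L2_B1 u) (Hurad : radial u)
  (Hmass : Rintegral (leb3 R) (B1 R) u
           = - (4 * pi / 3) * z - 4 * pi * (rho_s / R_s) * Rc) :
  let E := - 4 * pi * sigma * Rc ^+ 2
           - 4 * pi * R_g * T_inf * R_s ^+ 2 * Rc * z
           - (2 * pi * R_g * T_inf * R_s ^+ 3) / (3 * rho_s) * z ^+ 2
           + (c_v * gamma * T_inf * R_s ^+ 3) / (2 * rho_s)
             * Rintegral (leb3 R) (B1 R) (fun x => u x ^+ 2)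
           + 2 * pi * rho_l * R_s ^+ 3 * Rdot ^+ 2 in
  2 * pi * (4 * sigma + 3 * p_inf * R_s) * Rc ^+ 2
    + (c_v * T_inf * R_s ^+ 3) / (2 * rho_s)
      * Rintegral (leb3 R) (B1 R) (fun x => u x ^+ 2)
    + 2 * pi * rho_l * R_s ^+ 3 * Rdot ^+ 2 <= E.
Proof.
cbv zeta; rewrite -subr_ge0.
have hp : p_inf = R_g * T_inf * rho_s - 2 * sigma / R_s by rewrite Heq addrK.
have hg : gamma = (c_v + R_g) / c_v by rewrite -Hgas mulfK // gt_eqF.
have CS := @CS_B1 R u HuL2.
move: CS; rewrite Hmass => CS.
rewrite (@alg2 R gamma c_v R_g T_inf p_inf sigma rho_l rho_s R_s pi z Rc Rdot _ _
   (pi_gt0 R) Hcv Hrhos HRs hp hg erefl).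
apply: mulr_ge0; first by rewrite ltW // divr_gt0 ?mulr_gt0 ?exprn_gt0.
by rewrite subr_ge0.
Qed.
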